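(* Let $P_1$ be the uniform distribution on $[0,\frac12]$, let $P_2$ be the uniform distribution on $[\frac34,1]$, and let $P=\frac34P_1+\frac14P_2$. For $n\ge 2$, let $\alpha_n$ be an optimal set of $n$-means for $P$. Then $\alpha_n$ does not contain any point from the open interval $(\frac12,\frac34)$.
   Context: For a finite set $\alpha\subset\mathbb R$, $V(P;\alpha)=\int\min_{a\in\alpha}(x-a)^2\,dP(x)$; $V_n=\inf\{V(P;\alpha):\mathrm{card}(\alpha)\le n\}$; an optimal set of $n$-means is a set $\alpha$ with $\mathrm{card}(\alpha)\le n$ and $V(P;\alpha)=V_n$. *)

(* Defs.v *)
From Stdlib Require Import Reals List.
From Coquelicot Require Import Coquelicot.
Open Scope R_scope.

Fixpoint mindist (alpha : list R) (x : R) : R :=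
  match alpha with
  | nil => 0
  | a :: nil => (x - a) ^ 2
  | a :: l => Rmin ((x - a) ^ 2) (mindist l x)
  end.

(* Expectation under P1 = uniform on [0,1/2] (density 2) and
   P2 = uniform on [3/4,1] (density 4). *)
Definition E_P1 (f : R -> R) : R := 2 * RInt f 0 (1/2).
Definition E_P2 (f : R -> R) : R := 4 * RInt f (3/4) 1.
Definition E_P (f : R -> R) : R := 3/4 * E_P1 f + 1/4 * E_P2 f.

Definition V (alpha : list R) : R := E_P (mindist alpha).

(* alpha represents a finite set with card(alpha) <= n.  The empty set
   (V = +infinity) is excluded; it never attains the infimum. *)
Definition admissible (n : nat) (alpha : list R) : Prop :=
  alpha <> nil /\ NoDup alpha /\ (length alpha <= n)%nat.

Definition Vn (n : nat) : Rbar :=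
  Glb_Rbar (fun v => exists beta, admissible n beta /\ v = V beta).

Definition optimal_n_means (n : nat) (alpha : list R) : Prop :=
  admissible n alpha /\ Finite (V alpha) = Vn n.

(* Main.v *)
Require Import Defs.
From Stdlib Require Import Reals List Lra Psatz.
From Coquelicot Require Import Coquelicot.
Open Scope R_scope.

Lemma mindist_le : forall l p x, In p l -> mindist l x <= (x-p)^2.
Proof.
  induction l as [|a l IH]; intros p x H.
  - inversion H.
  - destruct l as [|a2 l2].
    + simpl in H. destruct H as [->|[]]. simpl. lra.
    + change (mindist (a::a2::l2) x) with (Rmin ((x-a)^2) (mindist (a2::l2) x)).
      destruct H as [->|H].
      * apply Rmin_l.
      * eapply Rle_trans; [apply Rmin_r| apply IH; auto].
Qed.

Lemma mindist_att : forall l x, l <> nil -> exists p, In p l /\ mindist l x = (x-p)^2.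
Proof.
  induction l as [|a l IH]; intros x H.
  - congruence.
  - destruct l as [|a2 l2].
    + exists a. simpl. auto.
    + change (mindist (a::a2::l2) x) with (Rmin ((x-a)^2) (mindist (a2::l2) x)).
      destruct (IH x) as [p [Hp Hq]]. discriminate.
      unfold Rmin. destruct (Rle_dec _ _).
      * exists a. simpl. auto.
      * exists p. simpl. auto.
Qed.

Lemma Rmin_alt : forall u v, Rmin u v = (u + v - Rabs (u - v))/2.
Proof.
  intros u v. unfold Rmin. destruct (Rle_dec u v).
  - rewrite Rabs_left1 by lra. lra.
  - rewrite Rabs_right by lra. lra.
Qed.

Lemma cont_sq : forall p x, continuous (fun y => (y-p)^2) x.
Proof. intros. apply (@ex_derive_continuous R_AbsRing R_NormedModule). auto_derive. auto. Qed.

Lemma mindist_cont : forall l x, continuous (mindist l) x.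
Proof.
  induction l as [|a l IH]; intros x.
  - apply continuous_const.
  - destruct l as [|a2 l2].
    + apply (continuous_ext (fun y => (y-a)^2)). reflexivity. apply cont_sq.
    + apply (continuous_ext (fun y => ((y-a)^2 + mindist (a2::l2) y - Rabs ((y-a)^2 - mindist (a2::l2) y))/2)).
      { intros y. change (mindist (a::a2::l2) y) with (Rmin ((y-a)^2) (mindist (a2::l2) y)).
        rewrite Rmin_alt. reflexivity. }
      apply continuity_pt_filterlim.
      assert (H1 : continuity_pt (fun y => (y-a)^2) x).
      { apply continuity_pt_filterlim. apply cont_sq. }
      assert (H2 : continuity_pt (mindist (a2::l2)) x).
      { apply continuity_pt_filterlim. apply IH. }
      apply continuity_pt_mult; [|apply continuity_pt_const; intros ? ?; reflexivity].
      apply continuity_pt_minus. apply continuity_pt_plus; auto.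
      apply (continuity_pt_comp (fun y => (y-a)^2 - mindist (a2::l2) y) Rabs).
      apply continuity_pt_minus; auto. apply Rcontinuity_abs.
Qed.

Lemma ex_RInt_cont : forall (f : R -> R) lo hi, (forall x, continuous f x) -> ex_RInt f lo hi.
Proof. intros. apply (@ex_RInt_continuous R_CompleteNormedModule). intros; auto. Qed.

Lemma RInt_antider : forall (F f : R -> R) lo hi,
  (forall x, is_derive F x (f x)) -> (forall x, continuous f x) -> RInt f lo hi = F hi - F lo.
Proof.
  intros F f lo hi HF Hf. apply (@is_RInt_unique R_CompleteNormedModule).
  apply (@is_RInt_derive R_CompleteNormedModule F f). intros; auto. intros; auto.
Qed.

Lemma RInt_bound : forall (f g : R -> R) lo hi, lo <= hi ->
  (forall x, continuous f x) -> (forall x, continuous g x) ->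
  (forall x, lo < x < hi -> f x <= g x) -> RInt f lo hi <= RInt g lo hi.
Proof.
  intros. apply RInt_le; auto; apply ex_RInt_cont; auto.
Qed.

Lemma RInt_split : forall (f : R -> R) lo m hi, (forall x, continuous f x) ->
  RInt f lo hi = RInt f lo m + RInt f m hi.
Proof.
  intros. symmetry. apply (RInt_Chasles f lo m hi); apply ex_RInt_cont; auto.
Qed.

Definition Dd (beta alpha : list R) (x : R) := mindist beta x - mindist alpha x.

Lemma Dd_cont : forall b a x, continuous (Dd b a) x.
Proof.
  intros b a x. unfold Dd. apply continuity_pt_filterlim.
  apply continuity_pt_minus; apply continuity_pt_filterlim; apply mindist_cont.
Qed.

Lemma V_diff : forall beta alpha,
  V beta - V alpha = 3/2 * RInt (Dd beta alpha) 0 (1/2) + RInt (Dd beta alpha) (3/4) 1.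
Proof.
  intros. unfold V, E_P, E_P1, E_P2, Dd.
  assert (E: forall lo hi, RInt (fun x => mindist beta x - mindist alpha x) lo hi
     = RInt (mindist beta) lo hi - RInt (mindist alpha) lo hi).
  { intros lo hi. apply (RInt_minus (mindist beta) (mindist alpha));
    apply ex_RInt_cont; apply mindist_cont. }
  rewrite !E. lra.
Qed.

Lemma zero_cont : forall x, continuous (fun _ : R => 0) x.
Proof. intros; apply continuous_const. Qed.

Lemma RInt_zero : forall lo hi, RInt (fun _ => 0) lo hi = 0.
Proof. intros. rewrite (RInt_antider (fun _ => 0) (fun _ => 0)). lra.
  intros; auto_derive; auto. apply zero_cont. Qed.

Definition mv (old new : R) (l : list R) := new :: remove Req_dec_T old l.

Lemma NoDup_remove' : forall (l : list R) x, NoDup l -> NoDup (remove Req_dec_T x l).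
Proof.
  induction l as [|a l IH]; intros x H; simpl. constructor.
  inversion H; subst. destruct (Req_dec_T x a).
  - auto.
  - constructor. intro Hin. apply in_remove in Hin. tauto. auto.
Qed.

Lemma adm_mv : forall n l old new, admissible n l -> In old l -> ~ In new l ->
  admissible n (mv old new l).
Proof.
  intros n l old new [H1 [H2 H3]] Ho Hn. split; [discriminate|split].
  - constructor. intro Hin. apply in_remove in Hin. tauto. apply NoDup_remove'; auto.
  - simpl. pose proof (remove_length_lt Req_dec_T l old Ho). lia.
Qed.

Lemma mv_le_new : forall l old new x, mindist (mv old new l) x <= (x-new)^2.
Proof. intros. apply mindist_le. left; auto. Qed.

Lemma mv_le_other : forall l old new q x, In q l -> q <> old -> mindist (mv old new l) x <= (x-q)^2.
Proof. intros. apply mindist_le. right. apply in_in_remove; auto. Qed.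

Lemma G1 : forall l old new x q, In q l -> q <> old -> (x-q)^2 <= (x-old)^2 ->
  Dd (mv old new l) l x <= 0.
Proof.
  intros l old new x q Hq Hne Hle. unfold Dd.
  destruct (mindist_att l x) as [p [Hp E]]. intro; subst; inversion Hq.
  rewrite E. destruct (Req_dec_T p old) as [->|Hpo].
  - pose proof (mv_le_other l old new q x Hq Hne). lra.
  - pose proof (mv_le_other l old new p x Hp Hpo). lra.
Qed.

Lemma G2 : forall l old x, In old l -> (forall p, In p l -> (x-old)^2 <= (x-p)^2) ->
  mindist l x = (x-old)^2.
Proof.
  intros l old x Ho H. apply Rle_antisym. apply mindist_le; auto.
  destruct (mindist_att l x) as [p [Hp E]]. intro; subst; inversion Ho.
  rewrite E. auto.
Qed.

Lemma G3 : forall l old new x, In old l -> (x-old)^2 <= (x-new)^2 ->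
  Dd (mv old new l) l x <= (x-new)^2 - (x-old)^2.
Proof.
  intros l old new x Ho Hle. unfold Dd.
  destruct (mindist_att l x) as [p [Hp E]]. intro; subst; inversion Ho.
  rewrite E. destruct (Req_dec_T p old) as [->|Hpo].
  - pose proof (mv_le_new l old new x). lra.
  - pose proof (mv_le_other l old new p x Hp Hpo). lra.
Qed.

Lemma opt_le : forall n alpha beta, optimal_n_means n alpha -> admissible n beta -> V alpha <= V beta.
Proof.
  intros n alpha beta [_ Heq] Hb.
  destruct (Glb_Rbar_correct (fun v => exists beta, admissible n beta /\ v = V beta)) as [Hlb _].
  specialize (Hlb (V beta) (ex_intro _ beta (conj Hb eq_refl))).
  unfold Vn in Heq. rewrite <- Heq in Hlb. simpl in Hlb. auto.
Qed.
Definition Sq (p q lo hi : R) := ((hi-p)^3 - (lo-p)^3 - (hi-q)^3 + (lo-q)^3)/3.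
Lemma Sq_eq p q lo hi : Sq p q lo hi = (q-p)*((hi*hi - lo*lo) - (p+q)*(hi-lo)).
Proof. unfold Sq. field. Qed.

Lemma alg_B3a a Rc : 1/2 < a < 3/4 -> 3/4 < Rc <= 1 ->
  a * (3/2*(1/2) + (Rc - 3/4)) = (3/2*(1/4) + (Rc*Rc - 9/16))/2 -> False.
Proof. intros. nra. Qed.

Lemma alg_B3b a L : 1/2 < a < 3/4 -> 0 < L < 1/2 -> L/2 <= 2*L - a ->
  a * (3/2*(1/2 - L) + 1/4) = (3/2*(1/4 - L*L) + 7/16)/2 -> False.
Proof. intros. nra. Qed.
Lemma alg_B3c_uv a u v : 1/2 < a < 3/4 -> 0 < u < 1/2 -> 0 < v < 1/4 ->
  a * (3/2*u + v) = 3/2*u*(1/2 - u/2) + v*(3/4 + v/2) ->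
  a >= 5/8 + 3/2*v ->
  0 <= 3*u*u*(a - 1/2 + u) - v*(3/4 + v/2 - a)*(3/4 + v/2 - a) -> False.
Proof.
  intros Ha Hu Hv H1 H3 H4.
  set (L := 1/2 - u) in *.
  set (w := 3/2*u). set (M := w + v). set (D := 1/4 + u/2 + v/2).
  set (e := 3/4 + v/2 - a).
  assert (Hw : 0 < w) by (unfold w; lra).
  assert (HM : 0 < M) by (unfold M; lra).
  assert (HD : 1/4 <= D) by (unfold D; lra).
  assert (K1 : e * M = w * D).
  { unfold e, M, w, D. nra. }
  assert (K2 : e <= 1/8 - v) by (unfold e; lra).
  assert (K2' : 0 < e).
  { assert (0 < w*D) by nra. nra. }
  assert (K3 : w * (1/8 + v) <= v * (1/8 - v)).
  { assert (w * D <= (1/8 - v) * M) by nra.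
    assert (w * (1/4) <= w * D) by nra. unfold M in *. nra. }
  assert (K4 : M <= D/2).
  { assert (M * (1/8 + v) <= v/4) by (unfold M; nra).
    assert (v <= 1/8) by lra. unfold D. nra. }
  assert (K5 : u <= 2*v/3).
  { assert (w <= v) by nra. unfold w in *. lra. }
  assert (K6 : (a - L) * M = v * D + u*M/2).
  { unfold M, w, D, L. nra. }
  assert (H4' : 2*w*u*(a-L) >= v*e*e).
  { unfold w, e, L. nra. }
  assert (H5 : 2*w*u*((a-L)*M)*M >= v*(e*M)*(e*M)).
  { assert (0 < M*M) by nra.
    assert (2*w*u*(a-L)*(M*M) >= v*e*e*(M*M)) by nra. nra. }
  rewrite K6, K1 in H5.
  assert (H6 : 2*u*(v*D + u*M/2)*M >= v*w*D*D).
  { assert (w * (2*u*(v*D + u*M/2)*M) >= w * (v*w*D*D)) by nra. nra. }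
  assert (H7 : 2*(v*D + u*M/2)*M >= 3/2*v*D*D).
  { unfold w in H6. assert (u * (2*(v*D + u*M/2)*M) >= u * (3/2*v*D*D)) by nra. nra. }
  assert (0 <= v*D*(D - 2*M)) by (apply Rmult_le_pos; nra).
  assert (HMM : M*M <= D*D/4) by nra.
  assert (0 <= u*(D*D/4 - M*M)) by (apply Rmult_le_pos; lra).
  assert (0 <= (2*v/3 - u)*(D*D/4)) by (apply Rmult_le_pos; nra).
  assert (0 < v*(D*D)) by (apply Rmult_lt_0_compat; nra).
  nra.
Qed.

Lemma alg_B3c a L R : 1/2 < a < 3/4 -> 0 < L < 1/2 -> 3/4 < R < 1 ->
  a * (3/2*(1/2 - L) + (R - 3/4)) = (3/2*(1/4 - L*L) + (R*R - 9/16))/2 ->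
  2*R - a <= (R+1)/2 ->
  0 <= 3/2 * Sq (2*L-a) a L (1/2) + Sq ((3/4+R)/2) a (3/4) R -> False.
Proof.
  intros Ha HL HR H1 H3 H4. rewrite !Sq_eq in H4.
  apply (alg_B3c_uv a (1/2 - L) (R - 3/4)); try lra.

Qed.

Lemma cont_sub : forall (f g : R -> R) x, continuous f x -> continuous g x -> continuous (fun y => f y - g y) x.
Proof.
  intros f g x Hf Hg. apply continuity_pt_filterlim.
  apply continuity_pt_minus; apply continuity_pt_filterlim; auto.
Qed.

Ltac Rify := match goal with |- ?a = ?b => change (@eq R a b) end.

Lemma RInt_sqd : forall p q lo hi, RInt (fun x => (x-p)^2 - (x-q)^2) lo hi = Sq p q lo hi.
Proof.
  intros. rewrite (RInt_antider (fun x => ((x-p)^3 - (x-q)^3)/3)).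
  Rify. unfold Sq. field.
  intros y. auto_derive; auto. Rify. field.
  intros y. apply cont_sub; apply cont_sq.
Qed.

Definition setup n alpha a L Rr := optimal_n_means n alpha /\ In a alpha /\ (1/2 < a < 3/4) /\
  L < a /\ a < Rr /\ (forall p, In p alpha -> p <= 2*L - a \/ p = a \/ 2*Rr - a <= p) /\
  (0 <= L -> In (2*L - a) alpha) /\ (Rr <= 1 -> In (2*Rr - a) alpha).

Lemma cell_a : forall n alpha a L Rr x, setup n alpha a L Rr -> L <= x <= Rr ->
  forall p, In p alpha -> (x-a)^2 <= (x-p)^2.
Proof.
  intros n alpha a L Rr x [_ [_ [Ha [HL [HR [Hs _]]]]]] Hx p Hp.
  destruct (Hs p Hp) as [H|[H|H]].
  - assert (0 <= (a-p)*(2*x-a-p)) by (apply Rmult_le_pos; lra). nra.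
  - subst; lra.
  - assert (0 <= (p-a)*(a+p-2*x)) by (apply Rmult_le_pos; lra). nra.
Qed.

Lemma nec_a : forall n alpha a L Rr a' Lc Rc (h1 h2 : R -> R), setup n alpha a L Rr ->
  2*L - a < a' < 2*Rr - a -> a' <> a ->
  0 <= Lc <= 1/2 -> 3/4 <= Rc <= 1 -> (Lc < 1/2 -> L <= Lc) -> (0 < Lc -> Lc <= L) ->
  (3/4 < Rc -> Rc <= Rr) -> (Rc < 1 -> Rr <= Rc) ->
  (forall x, continuous h1 x) -> (forall x, continuous h2 x) ->
  (forall x, Lc < x < 1/2 -> mindist (mv a a' alpha) x <= h1 x) ->
  (forall x, 3/4 < x < Rc -> mindist (mv a a' alpha) x <= h2 x) ->
  0 <= 3/2 * RInt (fun x => h1 x - (x-a)^2) Lc (1/2) + RInt (fun x => h2 x - (x-a)^2) (3/4) Rc.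
Proof.
  intros n alpha a L Rr a' Lc Rc h1 h2 HS Ha' Hne HLc HRc HLc1 HLc2 HRc1 HRc2 Hc1 Hc2 Hb1 Hb2.
  pose proof HS as [Hopt [Hin [Ha [HL [HR [Hs [HbI HcI]]]]]]].
  assert (Hnin : ~ In a' alpha).
  { intro H. destruct (Hs a' H) as [E|[E|E]]; lra. }
  assert (H0 := opt_le n alpha (mv a a' alpha) Hopt (adm_mv n alpha a a' (proj1 Hopt) Hin Hnin)).
  assert (E := V_diff (mv a a' alpha) alpha).
  set (D := Dd (mv a a' alpha) alpha) in *.
  assert (DC : forall x, continuous D x) by apply Dd_cont.
  rewrite (RInt_split D 0 Lc (1/2)) in E by auto.
  rewrite (RInt_split D (3/4) Rc 1) in E by auto.
  assert (I1 : RInt D 0 Lc <= RInt (fun _ => 0) 0 Lc).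
  { apply RInt_bound; auto. lra. apply zero_cont. intros x Hx.
    apply (G1 alpha a a' x (2*L-a)). apply HbI; lra. lra.
    assert (0 <= (a - (2*L-a))*(2*L - 2*x)) by (apply Rmult_le_pos; lra). nra. }
  assert (I2 : RInt D Lc (1/2) <= RInt (fun x => h1 x - (x-a)^2) Lc (1/2)).
  { apply RInt_bound; auto. lra. intros; apply cont_sub; auto; apply cont_sq. intros x Hx.
    unfold D, Dd. rewrite (G2 alpha a x Hin). specialize (Hb1 x Hx). lra.
    apply (cell_a n alpha a L Rr x HS). split; lra. }
  assert (I3 : RInt D (3/4) Rc <= RInt (fun x => h2 x - (x-a)^2) (3/4) Rc).
  { apply RInt_bound; auto. lra. intros; apply cont_sub; auto; apply cont_sq. intros x Hx.
    unfold D, Dd. rewrite (G2 alpha a x Hin). specialize (Hb2 x Hx). lra.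
    apply (cell_a n alpha a L Rr x HS). split; lra. }
  assert (I4 : RInt D Rc 1 <= RInt (fun _ => 0) Rc 1).
  { apply RInt_bound; auto. lra. apply zero_cont. intros x Hx.
    apply (G1 alpha a a' x (2*Rr-a)). apply HcI; lra. lra.
    assert (0 <= (2*Rr-a - a)*(2*x - 2*Rr)) by (apply Rmult_le_pos; lra). nra. }
  rewrite !RInt_zero in *. lra.
Qed.

Lemma nec_b : forall n alpha a L Rr b', setup n alpha a L Rr -> 0 < L < 1/2 ->
  2*L - a < b' <= L -> 0 <= 3/2 * Sq b' (2*L-a) 0 L.
Proof.
  intros n alpha a L Rr b' HS HL0 Hb'.
  pose proof HS as [Hopt [Hin [Ha [HL [HR [Hs [HbI HcI]]]]]]].
  set (b := 2*L - a) in *.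
  assert (Hbin : In b alpha) by (apply HbI; lra).
  assert (Hnin : ~ In b' alpha).
  { intro H. destruct (Hs b' H) as [E|[E|E]]; unfold b in *; lra. }
  assert (H0 := opt_le n alpha (mv b b' alpha) Hopt (adm_mv n alpha b b' (proj1 Hopt) Hbin Hnin)).
  assert (E := V_diff (mv b b' alpha) alpha).
  set (D := Dd (mv b b' alpha) alpha) in *.
  assert (DC : forall x, continuous D x) by apply Dd_cont.
  rewrite (RInt_split D 0 L (1/2)) in E by auto.
  assert (I1 : RInt D 0 L <= RInt (fun x => (x-b')^2 - (x-b)^2) 0 L).
  { apply RInt_bound; auto. lra. intros; apply cont_sub; apply cont_sq. intros x Hx.
    destruct (Rle_dec x b).
    - apply G3; auto. assert (0 <= (b'-b)*(b'+b-2*x)) by (apply Rmult_le_pos; lra). nra.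
    - unfold D, Dd. rewrite (G2 alpha b x Hbin). pose proof (mv_le_new alpha b b' x). lra.
      intros p Hp. destruct (Hs p Hp) as [E1|[E1|E1]].
      + fold b in E1. assert (0 <= (b-p)*(2*x-b-p)) by (apply Rmult_le_pos; lra). nra.
      + subst p. assert (0 <= (a-b)*(a+b-2*x)) by (apply Rmult_le_pos; unfold b in *; lra). nra.
      + assert (0 <= (p-b)*(p+b-2*x)) by (apply Rmult_le_pos; unfold b in *; lra). nra. }
  assert (I2 : RInt D L (1/2) <= RInt (fun _ => 0) L (1/2)).
  { apply RInt_bound; auto. lra. apply zero_cont. intros x Hx.
    apply (G1 alpha b b' x a). auto. unfold b; lra.
    assert (0 <= (a-b)*(2*x-a-b)) by (apply Rmult_le_pos; unfold b in *; lra). nra. }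
  assert (I3 : RInt D (3/4) 1 <= RInt (fun _ => 0) (3/4) 1).
  { apply RInt_bound; auto. lra. apply zero_cont. intros x Hx.
    apply (G1 alpha b b' x a). auto. unfold b; lra.
    assert (0 <= (a-b)*(2*x-a-b)) by (apply Rmult_le_pos; unfold b in *; lra). nra. }
  rewrite !RInt_zero in *. rewrite RInt_sqd in I1. lra.
Qed.

Lemma nec_c : forall n alpha a L Rr c', setup n alpha a L Rr -> 3/4 < Rr < 1 ->
  Rr <= c' < 2*Rr - a -> 0 <= Sq c' (2*Rr-a) Rr 1.
Proof.
  intros n alpha a L Rr c' HS HR0 Hc'.
  pose proof HS as [Hopt [Hin [Ha [HL [HR [Hs [HbI HcI]]]]]]].
  set (c := 2*Rr - a) in *.
  assert (Hcin : In c alpha) by (apply HcI; lra).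
  assert (Hnin : ~ In c' alpha).
  { intro H. destruct (Hs c' H) as [E|[E|E]]; unfold c in *; lra. }
  assert (H0 := opt_le n alpha (mv c c' alpha) Hopt (adm_mv n alpha c c' (proj1 Hopt) Hcin Hnin)).
  assert (E := V_diff (mv c c' alpha) alpha).
  set (D := Dd (mv c c' alpha) alpha) in *.
  assert (DC : forall x, continuous D x) by apply Dd_cont.
  rewrite (RInt_split D (3/4) Rr 1) in E by auto.
  assert (I1 : RInt D Rr 1 <= RInt (fun x => (x-c')^2 - (x-c)^2) Rr 1).
  { apply RInt_bound; auto. lra. intros; apply cont_sub; apply cont_sq. intros x Hx.
    destruct (Rle_dec c x).
    - apply G3; auto. assert (0 <= (c-c')*(2*x-c-c')) by (apply Rmult_le_pos; lra). nra.
    - unfold D, Dd. rewrite (G2 alpha c x Hcin). pose proof (mv_le_new alpha c c' x). lra.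
      intros p Hp. destruct (Hs p Hp) as [E1|[E1|E1]].
      + assert (0 <= (c-p)*(2*x-c-p)) by (apply Rmult_le_pos; unfold c in *; lra). nra.
      + subst p. assert (0 <= (c-a)*(2*x-a-c)) by (apply Rmult_le_pos; unfold c in *; lra). nra.
      + fold c in E1. assert (0 <= (p-c)*(p+c-2*x)) by (apply Rmult_le_pos; lra). nra. }
  assert (I2 : RInt D (3/4) Rr <= RInt (fun _ => 0) (3/4) Rr).
  { apply RInt_bound; auto. lra. apply zero_cont. intros x Hx.
    apply (G1 alpha c c' x a). auto. unfold c; lra.
    assert (0 <= (c-a)*(a+c-2*x)) by (apply Rmult_le_pos; unfold c in *; lra). nra. }
  assert (I3 : RInt D 0 (1/2) <= RInt (fun _ => 0) 0 (1/2)).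
  { apply RInt_bound; auto. lra. apply zero_cont. intros x Hx.
    apply (G1 alpha c c' x a). auto. unfold c; lra.
    assert (0 <= (c-a)*(a+c-2*x)) by (apply Rmult_le_pos; unfold c in *; lra). nra. }
  rewrite !RInt_zero in *. rewrite RInt_sqd in I1. lra.
Qed.

Lemma pred_ex : forall (l : list R) y,
  (exists b, In b l /\ b < y /\ forall p, In p l -> p < y -> p <= b) \/ (forall p, In p l -> y <= p).
Proof.
  induction l as [|a l IH]; intros y.
  - right. intros p [].
  - destruct (IH y) as [[b [Hb [Hby Hp]]]|Hp].
    + left. destruct (Rlt_dec a y).
      * exists (Rmax a b). split. unfold Rmax; destruct (Rle_dec a b); simpl; auto.
        split. unfold Rmax; destruct (Rle_dec a b); lra.
        intros p [<-|H] Hpy. apply Rmax_l. eapply Rle_trans; [apply Hp; auto|apply Rmax_r].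
      * exists b. split. right; auto. split; auto. intros p [<-|H] Hpy. lra. auto.
    + destruct (Rlt_dec a y).
      * left. exists a. split. left; auto. split; auto. intros p [<-|H] Hpy. lra.
        specialize (Hp p H). lra.
      * right. intros p [<-|H]. lra. auto.
Qed.

Lemma succ_ex : forall (l : list R) y,
  (exists c, In c l /\ y < c /\ forall p, In p l -> y < p -> c <= p) \/ (forall p, In p l -> p <= y).
Proof.
  induction l as [|a l IH]; intros y.
  - right. intros p [].
  - destruct (IH y) as [[b [Hb [Hby Hp]]]|Hp].
    + left. destruct (Rlt_dec y a).
      * exists (Rmin a b). split. unfold Rmin; destruct (Rle_dec a b); simpl; auto.
        split. unfold Rmin; destruct (Rle_dec a b); lra.
        intros p [<-|H] Hpy. apply Rmin_l. eapply Rle_trans; [apply Rmin_r|apply Hp; auto].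
      * exists b. split. right; auto. split; auto. intros p [<-|H] Hpy. lra. auto.
    + destruct (Rlt_dec y a).
      * left. exists a. split. left; auto. split; auto. intros p [<-|H] Hpy. lra.
        specialize (Hp p H). lra.
      * right. intros p [<-|H]. lra. auto.
Qed.

Lemma caseA : forall n alpha a L Rr, setup n alpha a L Rr -> 1/2 <= L -> Rr <= 3/4 -> False.
Proof.
  intros n alpha a L Rr HS HL0 HR0.
  pose proof HS as [Hopt [Hin [Ha [HL [HR [Hs [HbI HcI]]]]]]].
  assert (Hbin : In (2*L-a) alpha) by (apply HbI; lra).
  assert (Hcin : In (2*Rr-a) alpha) by (apply HcI; lra).
  assert (Hlo : exists lo, 3/4 <= lo < 7/8 /\ forall p, In p alpha -> p <= lo \/ 7/8 <= p).
  { destruct (pred_ex alpha (7/8)) as [[b1 [Hb1 [Hb1y Hp]]]|Hp].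
    - exists (Rmax b1 (3/4)). split. split. apply Rmax_r. unfold Rmax; destruct (Rle_dec b1 (3/4)); lra.
      intros p Hpin. destruct (Rlt_dec p (7/8)). left. eapply Rle_trans; [apply Hp; auto| apply Rmax_l].
      right; lra.
    - exists (3/4). split. lra. intros p Hpin. right. auto. }
  destruct Hlo as [lo [Hlo Hsep]].
  set (h := 7/8 - lo). set (t := (lo + 7/8)/2).
  assert (Hnin : ~ In t alpha).
  { intro H. destruct (Hsep t H); unfold t in *; lra. }
  assert (H0 := opt_le n alpha (mv a t alpha) Hopt (adm_mv n alpha a t (proj1 Hopt) Hin Hnin)).
  assert (E := V_diff (mv a t alpha) alpha).
  set (D := Dd (mv a t alpha) alpha) in *.
  assert (DC : forall x, continuous D x) by apply Dd_cont.
  rewrite (RInt_split D (3/4) (t - h/4) 1) in E by auto.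
  rewrite (RInt_split D (t-h/4) (t + h/4) 1) in E by auto.
  assert (I1 : RInt D 0 (1/2) <= RInt (fun _ => 0) 0 (1/2)).
  { apply RInt_bound; auto. lra. apply zero_cont. intros x Hx.
    apply (G1 alpha a t x (2*L-a)). auto. lra.
    assert (0 <= (a-(2*L-a))*(2*L-2*x)) by (apply Rmult_le_pos; lra). nra. }
  assert (I2 : RInt D (3/4) (t-h/4) <= RInt (fun _ => 0) (3/4) (t-h/4)).
  { apply RInt_bound; auto. unfold t, h; lra. apply zero_cont. intros x Hx.
    apply (G1 alpha a t x (2*Rr-a)). auto. lra.
    assert (0 <= (2*Rr-a-a)*(2*x-2*Rr)) by (apply Rmult_le_pos; lra). nra. }
  assert (I4 : RInt D (t+h/4) 1 <= RInt (fun _ => 0) (t+h/4) 1).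
  { apply RInt_bound; auto. unfold t, h; lra. apply zero_cont. intros x Hx.
    apply (G1 alpha a t x (2*Rr-a)). auto. lra.
    assert (0 <= (2*Rr-a-a)*(2*x-2*Rr)) by (apply Rmult_le_pos; unfold t, h in *; lra). nra. }
  assert (I3 : RInt D (t-h/4) (t+h/4) <= RInt (fun x => (x-t)^2 - h*h/16) (t-h/4) (t+h/4)).
  { apply RInt_bound; auto. unfold t, h; lra.
    intros; apply cont_sub. apply cont_sq. apply continuous_const. intros x Hx.
    unfold D, Dd. pose proof (mv_le_new alpha a t x).
    destruct (mindist_att alpha x) as [p [Hp Ep]]. intro E'; rewrite E' in Hin; inversion Hin.
    rewrite Ep. destruct (Hsep p Hp).
    - assert (h/4 <= x - p) by (unfold t, h in *; lra). nra.
    - assert (h/4 <= p - x) by (unfold t, h in *; lra). nra. }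
  rewrite (RInt_antider (fun x => (x-t)^3/3 - h*h/16*x) (fun x => (x-t)^2 - h*h/16)) in I3.
  2: { intros y. auto_derive; auto. Rify. field. }
  2: { intros; apply cont_sub. apply cont_sq. apply continuous_const. }
  rewrite !RInt_zero in *.
  assert (0 < h) by (unfold h; lra).
  assert (Hv : (t + h/4 - t)^3/3 - h*h/16*(t+h/4) - ((t - h/4 - t)^3/3 - h*h/16*(t-h/4)) = - h*h*h/48) by field.
  assert (0 < h*h*h) by (apply Rmult_lt_0_compat; nra).
  lra.
Qed.

Lemma core : forall n alpha a L Rr, setup n alpha a L Rr -> False.
Proof.
  intros n alpha a L Rr HS.
  pose proof HS as [Hopt [Hin [Ha [HL [HR [Hs [HbI HcI]]]]]]].
  assert (LcE : L < 1/2 -> exists Lc, 0 <= Lc < 1/2 /\ L <= Lc /\ (0 < Lc -> Lc <= L)).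
  { intros. destruct (Rle_dec 0 L). exists L. lra. exists 0. lra. }
  assert (RcE : 3/4 < Rr -> exists Rc, 3/4 < Rc <= 1 /\ Rc <= Rr /\ (Rc < 1 -> Rr <= Rc)).
  { intros. destruct (Rle_dec Rr 1). exists Rr. lra. exists 1. lra. }
  destruct (Rle_dec (1/2) L) as [HL1|HL1]; destruct (Rle_dec Rr (3/4)) as [HR1|HR1].
  - exact (caseA n alpha a L Rr HS HL1 HR1).
  -
    destruct (RcE ltac:(lra)) as [Rc [HRc [HRc1 HRc2]]].
    set (a' := (3/4 + Rc)/2).
    assert (H := nec_a n alpha a L Rr a' (1/2) Rc (fun x => (x-a')^2) (fun x => (x-a')^2) HS).
    cbv beta in H. rewrite !RInt_sqd in H.
    assert (H' : 0 <= 3/2 * Sq a' a (1/2) (1/2) + Sq a' a (3/4) Rc).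
    { apply H; try (unfold a'; lra); intros; try apply cont_sq; apply mv_le_new. }
    rewrite !Sq_eq in H'. unfold a' in H'.
    assert (0 < (Rc - 3/4) * ((3/4+Rc)/2 - a)^2) by (apply Rmult_lt_0_compat; [lra|]; nra).
    nra.
  -
    destruct (LcE ltac:(lra)) as [Lc [HLc [HLc1 HLc2]]].
    set (a' := (Lc + 1/2)/2).
    assert (H := nec_a n alpha a L Rr a' Lc (3/4) (fun x => (x-a')^2) (fun x => (x-a')^2) HS).
    cbv beta in H. rewrite !RInt_sqd in H.
    assert (H' : 0 <= 3/2 * Sq a' a Lc (1/2) + Sq a' a (3/4) (3/4)).
    { apply H; try (unfold a'; lra); intros; try apply cont_sq; apply mv_le_new. }
    rewrite !Sq_eq in H'. unfold a' in H'.
    assert (0 < (1/2 - Lc) * (a - (Lc + 1/2)/2)^2) by (apply Rmult_lt_0_compat; [lra|]; nra).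
    nra.
  -
    destruct (LcE ltac:(lra)) as [Lc [HLc [HLc1 HLc2]]].
    destruct (RcE ltac:(lra)) as [Rc [HRc [HRc1 HRc2]]].
    set (M := 3/2*(1/2 - Lc) + (Rc - 3/4)).
    set (N2 := 3/2*(1/4 - Lc*Lc) + (Rc*Rc - 9/16)).
    assert (HM : 0 < M) by (unfold M; lra).
    assert (Heq : a * M = N2/2).
    { set (m := N2/(2*M)).
      assert (Hm : m * (2*M) = N2) by (unfold m; field; lra).
      destruct (Req_dec a m) as [E|Hne]. rewrite E. lra.
      assert (Hm1 : Lc <= m).
      { assert (0 <= (m - Lc)*(2*M)).
        { replace ((m - Lc)*(2*M)) with (N2 - Lc*(2*M)) by (rewrite <- Hm; ring). unfold N2, M. nra. }
        nra. }
      assert (Hm2 : m <= Rc).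
      { assert (0 <= (Rc - m)*(2*M)).
        { replace ((Rc - m)*(2*M)) with (Rc*(2*M) - N2) by (rewrite <- Hm; ring). unfold N2, M. nra. }
        nra. }
      assert (H := nec_a n alpha a L Rr m Lc Rc (fun x => (x-m)^2) (fun x => (x-m)^2) HS).
      cbv beta in H. rewrite !RInt_sqd in H.
      assert (H' : 0 <= 3/2 * Sq m a Lc (1/2) + Sq m a (3/4) Rc).
      { apply H; try lra; intros; try apply cont_sq; apply mv_le_new. }
      rewrite !Sq_eq in H'.
      assert (Hid : 3/2 * ((a - m) * (1/2*(1/2) - Lc*Lc - (m + a)*(1/2 - Lc))) +
          (a - m) * (Rc*Rc - 3/4*(3/4) - (m + a)*(Rc - 3/4)) = (a - m) * (N2 - (m+a)*M))
        by (unfold N2, M; field).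
      rewrite Hid in H'.
      assert (N2 - (m+a)*M = (m - a)*M) by lra.
      assert (0 < M * (a-m)^2) by (apply Rmult_lt_0_compat; [lra|]; assert (a - m <> 0) by lra; nra).
      nra. }
    unfold M, N2 in Heq.
    destruct (Req_dec Lc 0) as [HL0|HL0].
    + subst Lc. apply (alg_B3a a Rc); try lra.
    + assert (ELc : Lc = L) by (apply Rle_antisym; [apply HLc2; lra| lra]).
      subst Lc.
      destruct (Req_dec Rc 1) as [HR0|HR0].
      * subst Rc. destruct (Rlt_dec (2*L - a) (L/2)) as [Hb|Hb].
        -- assert (H := nec_b n alpha a L Rr (L/2) HS ltac:(lra) ltac:(lra)).
           rewrite Sq_eq in H.
           assert (0 < L * (2*L - a - L/2)^2) by (apply Rmult_lt_0_compat; [lra|]; nra).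
           nra.
        -- apply (alg_B3b a L); lra.
      * assert (ERc : Rc = Rr) by (apply Rle_antisym; [lra| apply HRc2; lra]).
        subst Rc.
        destruct (Rlt_dec ((Rr+1)/2) (2*Rr - a)) as [Hc|Hc].
        -- assert (H := nec_c n alpha a L Rr ((Rr+1)/2) HS ltac:(lra) ltac:(lra)).
           rewrite Sq_eq in H.
           assert (0 < (1 - Rr) * (2*Rr - a - (Rr+1)/2)^2) by (apply Rmult_lt_0_compat; [lra|]; nra).
           nra.
        -- set (a' := (3/4 + Rr)/2).
           assert (Hbin : In (2*L - a) alpha) by (apply HbI; lra).
           assert (H := nec_a n alpha a L Rr a' L Rr (fun x => (x-(2*L-a))^2) (fun x => (x-a')^2) HS).
           cbv beta in H. rewrite !RInt_sqd in H.
           assert (H' : 0 <= 3/2 * Sq (2*L-a) a L (1/2) + Sq a' a (3/4) Rr).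
           { apply H; try (unfold a'; lra); intros; try apply cont_sq.
             apply mv_le_other; auto. lra. apply mv_le_new. }
           apply (alg_B3c a L Rr); try lra. exact H'.
Qed.

Theorem proposition3p6 :
  forall (n : nat) (alpha : list R),
    (2 <= n)%nat ->
    optimal_n_means n alpha ->
    forall a : R, In a alpha -> ~ (1/2 < a < 3/4).
Proof.
  intros n alpha _ Hopt a Hin Ha.
  assert (HL : exists L, L < a /\ (forall p, In p alpha -> p < a -> p <= 2*L - a) /\
                         (0 <= L -> In (2*L - a) alpha)).
  { destruct (pred_ex alpha a) as [[b [Hb [Hba Hp]]]|Hp].
    - exists ((a+b)/2). replace (2*((a+b)/2) - a) with b by field. split. lra. split; auto.
    - exists (-1). split. lra. split. intros p Hp1 Hp2. specialize (Hp p Hp1). lra. intros; lra. }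
  assert (HR : exists Rr, a < Rr /\ (forall p, In p alpha -> a < p -> 2*Rr - a <= p) /\
                         (Rr <= 1 -> In (2*Rr - a) alpha)).
  { destruct (succ_ex alpha a) as [[c [Hc [Hac Hp]]]|Hp].
    - exists ((a+c)/2). replace (2*((a+c)/2) - a) with c by field. split. lra. split; auto.
    - exists 2. split. lra. split. intros p Hp1 Hp2. specialize (Hp p Hp1). lra. intros; lra. }
  destruct HL as [L [HL1 [HL2 HL3]]]. destruct HR as [Rr [HR1 [HR2 HR3]]].
  apply (core n alpha a L Rr).
  refine (conj Hopt (conj Hin (conj Ha (conj HL1 (conj HR1 (conj _ (conj HL3 HR3))))))).
  intros p Hp. destruct (Rlt_dec p a). left; auto. destruct (Req_dec p a). right; left; auto.
  right; right. apply HR2; auto. lra.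
Qed.
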